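(* $\eta^{(1)}=\frac nN$. Moreover, for an $(N,n)$ dual pair $(F,G)$ for $\mathcal H$: (i) $(F,G)\in\mathcal N^{(1)}$ if and only if $\|f_i\|\,\|g_i\|=\frac nN$ for all $1\le i\le N$; (ii) if $(F,G)\in\mathcal N^{(1)}$, then $\langle f_i,g_i\rangle=\frac nN$ for all $1\le i\le N$; the converse does not hold in general.
   Context: $\mathcal H$ is a complex Hilbert space of finite dimension $n$, inner product linear in the first argument, $N\ge n$. A finite sequence $F=\{f_i\}_{i=1}^N$ is a frame if there are $0<A\le B$ with $A\|f\|^2\le\sum_i|\langle f,f_i\rangle|^2\le B\|f\|^2$ for all $f$. $G=\{g_i\}_{i=1}^N$ is a dual of $F$ if $f=\sum_i\langle f,g_i\rangle f_i$ for all $f$; $(F,G)$ is then an $(N,n)$ dual pair. $E_{\Lambda,F,G}f=\sum_{i\in\Lambda}\langle f,f_i\rangle g_i$ for $\Lambda\subseteq\{1,\dots,N\}$. The numerical radius is $\omega(T)=\sup\{|\langle Tf,f\rangle|:\|f\|=1\}$; $\eta^{(1)}_{F,G}=\max_{1\le i\le N}\omega(E_{\{i\},F,G})$; $\eta^{(1)}=\inf\{\eta^{(1)}_{F,G}:(F,G)\text{ an }(N,n)\text{ dual pair}\}$; $\mathcal N^{(1)}=\{(F,G):\eta^{(1)}_{F,G}=\eta^{(1)}\}$. *)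

(* Defs.v *)
(* R : realType, complex scalars R[i] (mathcomp-real-closed),
   H = 'cV[R[i]]_n (column vectors), finite sequences indexed by 'I_N. *)
From HB Require Import structures.
From mathcomp Require Import all_boot all_order all_algebra.
From mathcomp Require Import complex.
From mathcomp Require Import classical_sets reals.
Set Implicit Arguments. Unset Strict Implicit. Unset Printing Implicit Defensive.
Import Order.TTheory GRing.Theory Num.Theory.
Local Open Scope ring_scope.
Local Open Scope classical_set_scope.

Section Frames.
Variable R : realType.
Local Notation C := R[i].

Definition ip (n : nat) (f g : 'cV[C]_n) : C :=
  \sum_(k < n) f k 0 * (g k 0)^*.

Definition cabs (z : C) : R := Normc.normc z.

Definition vnorm (n : nat) (f : 'cV[C]_n) : R := Num.sqrt (@complex.Re R (ip f f)).

Definition is_frame (n N : nat) (F : 'I_N -> 'cV[C]_n) : Prop :=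
  exists A B : R, 0 < A /\ A <= B /\
    forall f : 'cV[C]_n,
      A * vnorm f ^+ 2 <= \sum_(i < N) cabs (ip f (F i)) ^+ 2 /\
      \sum_(i < N) cabs (ip f (F i)) ^+ 2 <= B * vnorm f ^+ 2.

Definition is_dual (n N : nat) (F G : 'I_N -> 'cV[C]_n) : Prop :=
  forall f : 'cV[C]_n, f = \sum_(i < N) ip f (G i) *: F i.

Definition dual_pair (n N : nat) (F G : 'I_N -> 'cV[C]_n) : Prop :=
  is_frame F /\ is_dual F G.

Definition E_op (n N : nat) (L : {set 'I_N}) (F G : 'I_N -> 'cV[C]_n)
  (f : 'cV[C]_n) : 'cV[C]_n :=
  \sum_(i in L) ip f (F i) *: G i.

Definition numrad (n : nat) (T : 'cV[C]_n -> 'cV[C]_n) : R :=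
  sup [set cabs (ip (T f) f) | f in [set f : 'cV[C]_n | vnorm f = 1]].

(* eta^(1)_{F,G} = max_i omega(E_{{i},F,G}) (all terms are >= 0) *)
Definition eta1FG (n N : nat) (F G : 'I_N -> 'cV[C]_n) : R :=
  \big[Num.max/0]_(i < N) numrad (E_op [set i] F G).

Definition eta1 (n N : nat) : R :=
  inf [set eta1FG FG.1 FG.2 |
       FG in [set FG : ('I_N -> 'cV[C]_n) * ('I_N -> 'cV[C]_n) |
              dual_pair FG.1 FG.2]].

Definition inN1 (n N : nat) (F G : 'I_N -> 'cV[C]_n) : Prop :=
  eta1FG F G = eta1 n N.

End Frames.

(* Main.v *)
Require Import Defs.
From HB Require Import structures.
From mathcomp Require Import all_boot all_order all_algebra.
From mathcomp Require Import complex.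
From mathcomp Require Import boolp classical_sets reals.
From mathcomp Require Import ring.
From mathcomp Require Import cyclic separable cyclotomic.
Import Order.TTheory GRing.Theory Num.Theory.
Local Open Scope ring_scope.
Local Open Scope classical_set_scope.
Set Implicit Arguments. Unset Strict Implicit. Unset Printing Implicit Defensive.

Section A.
Variable R : realType.
Local Notation C := R[i].
Local Notation rc := (real_complex R).

Lemma cabsE (z : C) : rc (cabs z) = `|z|.
Proof. by case: z. Qed.

Lemma cabs_ge0 (z : C) : 0 <= cabs z.
Proof. by have := normr_ge0 z; rewrite -cabsE -[0 : C](rmorph0 rc) lecR. Qed.

Lemma ip_conj n (f g : 'cV[C]_n) : ip g f = (ip f g)^*.
Proof.
rewrite /ip rmorph_sum; apply: eq_bigr => k _.
by rewrite rmorphM /= conjCK mulrC.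
Qed.

Lemma ip_sumL n (I : finType) (P : pred I) (a : I -> C) (v : I -> 'cV[C]_n)
  (g : 'cV[C]_n) :
  ip (\sum_(i | P i) a i *: v i) g = \sum_(i | P i) a i * ip (v i) g.
Proof.
rewrite /ip.
under eq_bigr do rewrite summxE big_distrl.
rewrite exchange_big; apply: eq_bigr => i _.
rewrite /= big_distrr; apply: eq_bigr => k _.
by rewrite mxE; exact/esym/mulrA.
Qed.

Lemma ip_sumR n (I : finType) (P : pred I) (a : I -> C) (v : I -> 'cV[C]_n)
  (g : 'cV[C]_n) :
  ip g (\sum_(i | P i) a i *: v i) = \sum_(i | P i) (a i)^* * ip g (v i).
Proof.
rewrite ip_conj ip_sumL rmorph_sum; apply: eq_bigr => i _.
by rewrite rmorphM /= -ip_conj.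
Qed.

Lemma ipZl n a (f g : 'cV[C]_n) : ip (a *: f) g = a * ip f g.
Proof.
rewrite /ip big_distrr; apply: eq_bigr => k _; rewrite mxE; exact/esym/mulrA.
Qed.

Lemma ipZr n a (f g : 'cV[C]_n) : ip f (a *: g) = a^* * ip f g.
Proof. by rewrite ip_conj ipZl rmorphM /= -ip_conj. Qed.

Lemma ipDl n (f g h : 'cV[C]_n) : ip (f + g) h = ip f h + ip g h.
Proof. by rewrite /ip -big_split; apply: eq_bigr => k _; rewrite mxE mulrDl. Qed.

Lemma ipDr n (f g h : 'cV[C]_n) : ip h (f + g) = ip h f + ip h g.
Proof. by rewrite ip_conj ipDl rmorphD /= -!ip_conj. Qed.

Lemma ipNl n (f g : 'cV[C]_n) : ip (- f) g = - ip f g.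
Proof. by rewrite -scaleN1r ipZl mulN1r. Qed.

Lemma ipNr n (f g : 'cV[C]_n) : ip g (- f) = - ip g f.
Proof. by rewrite -scaleN1r ipZr rmorphN1 mulN1r. Qed.

Lemma ipff_ge0 n (f : 'cV[C]_n) : 0 <= ip f f.
Proof. by rewrite /ip sumr_ge0 // => k _; rewrite -normCK exprn_ge0. Qed.

Lemma ipff_eq0 n (f : 'cV[C]_n) : ip f f = 0 -> f = 0.
Proof.
move=> h; apply/matrixP => k j; rewrite ord1 mxE.
have nn : forall i : 'I_n, xpredT i -> 0 <= f i 0 * (f i 0)^*.
  by move=> i _; rewrite -normCK exprn_ge0.
have := psumr_eq0P nn h (i:=k) isT.
by rewrite -normCK => /eqP; rewrite expf_eq0 /= normr_eq0 => /eqP.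
Qed.

Lemma vnorm_ge0 n (f : 'cV[C]_n) : 0 <= vnorm f.
Proof. exact: sqrtr_ge0. Qed.

Lemma vnormC n (f : 'cV[C]_n) : rc (vnorm f) ^+ 2 = ip f f.
Proof.
have h := ipff_ge0 f.
have hr := RRe_real (ger0_real h).
rewrite -rmorphXn /vnorm sqr_sqrtr; first exact: hr.
by move: h; rewrite -hr -[0 : C](rmorph0 rc) lecR.
Qed.

Lemma vnormCP n (f : 'cV[C]_n) : 0 <= rc (vnorm f).
Proof. by rewrite -[0 : C](rmorph0 rc) lecR vnorm_ge0. Qed.

Lemma ip0r n (f : 'cV[C]_n) : ip f 0 = 0.
Proof. by rewrite /ip big1 // => k _; rewrite mxE rmorph0 mulr0. Qed.

Lemma ip0l n (f : 'cV[C]_n) : ip 0 f = 0.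
Proof. by rewrite ip_conj ip0r rmorph0. Qed.

Lemma CS2 n (f g : 'cV[C]_n) : `|ip f g| ^+ 2 <= ip f f * ip g g.
Proof.
have [b0|bn0] := eqVneq (ip g g) 0.
  by rewrite (ipff_eq0 b0) !ip0r normr0 expr0n /= mulr0.
have bp : 0 < ip g g by rewrite lt_def bn0 ipff_ge0.
have bc : (ip g g)^* = ip g g by rewrite conj_Creal // ger0_real // ltW.
set t := ip f g / ip g g.
have := ipff_ge0 (f - t *: g).
rewrite ipDl !ipDr !ipNl !ipNr !ipZl !ipZr [ip g f]ip_conj.
rewrite /t rmorphM /= fmorphV /= bc normCK.
set a := ip f f; set b := ip g g; set c := ip f g.
have -> : a - c^* / b * c + (- (c / b * c^*) - - (c / b * (c^* / b * b)))
   = a - c * c^* / b.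
  by field; exact: bn0.
by rewrite subr_ge0 ler_pdivrMr.
Qed.

Lemma CS n (f g : 'cV[C]_n) : `|ip f g| <= rc (vnorm f) * rc (vnorm g).
Proof.
rewrite -(@ler_pXn2r _ 2) // ?qualifE /= ?mulr_ge0 ?vnormCP //.
by rewrite exprMn !vnormC CS2.
Qed.

Lemma cabs_le (z : C) r : (cabs z <= r) = (`|z| <= rc r).
Proof. by rewrite -cabsE lecR. Qed.

Lemma numrad_le n (T : 'cV[C]_n -> 'cV[C]_n) c : 0 <= c ->
  (forall f, vnorm f = 1 -> cabs (ip (T f) f) <= c) -> numrad T <= c.
Proof.
move=> c0 hb; rewrite /numrad.
set S := (X in sup X).
case: (pselect (S !=set0)) => [ne|e].
  apply: ge_sup => // y [f /= f1 <-]; exact: hb.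
have -> : S = set0 by apply/eqP/negbNE/negP => /set0P.
by rewrite sup0.
Qed.

Lemma numrad_ge n (T : 'cV[C]_n -> 'cV[C]_n) c f :
  (forall f, vnorm f = 1 -> cabs (ip (T f) f) <= c) -> vnorm f = 1 ->
  cabs (ip (T f) f) <= numrad T.
Proof.
move=> hb f1; rewrite /numrad; apply: ub_le_sup; last by exists f.
by exists c => y [g /= g1 <-]; exact: hb.
Qed.

Lemma numrad_ge0 n (T : 'cV[C]_n -> 'cV[C]_n) c :
  (forall f, vnorm f = 1 -> cabs (ip (T f) f) <= c) -> 0 <= numrad T.
Proof.
move=> hb; rewrite /numrad.
set S := (X in sup X).
case: (pselect (S !=set0)) => [[y [f /= f1 _]]|e].
  exact: le_trans (cabs_ge0 _) (numrad_ge hb f1).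
have -> : S = set0 by apply/eqP/negbNE/negP => /set0P.
by rewrite sup0.
Qed.

Lemma E1E n N (F G : 'I_N -> 'cV[C]_n) i f :
  E_op [set i] F G f = ip f (F i) *: G i.
Proof. by rewrite /E_op big_set1. Qed.

Lemma E1_bound n N (F G : 'I_N -> 'cV[C]_n) i f : vnorm f = 1 ->
  cabs (ip (E_op [set i] F G f) f) <= vnorm (F i) * vnorm (G i).
Proof.
move=> f1; rewrite E1E ipZl cabs_le normrM rmorphM /=.
rewrite -[X in _ <= X]mul1r -[1 : C](rmorph1 rc) -(expr1n _ 2) -f1 expr2 rmorphM.
have -> : rc (vnorm f) * rc (vnorm f) * (rc (vnorm (F i)) * rc (vnorm (G i)))
  = (rc (vnorm f) * rc (vnorm (F i))) * (rc (vnorm (G i)) * rc (vnorm f)).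
  by ring.
apply: ler_pM; rewrite ?normr_ge0 ?CS //.
Qed.

Lemma numrad_E_le n N (F G : 'I_N -> 'cV[C]_n) i :
  numrad (E_op [set i] F G) <= vnorm (F i) * vnorm (G i).
Proof.
apply: numrad_le; first by rewrite mulr_ge0 ?vnorm_ge0.
exact: E1_bound.
Qed.

Lemma rc_ge0 r : (0 <= rc r) = (0 <= r).
Proof. by rewrite -[0 : C](rmorph0 rc) lecR. Qed.

Lemma conj_rc r : (rc r)^* = rc r.
Proof. by rewrite conj_Creal //; apply/complex_realP; exists r. Qed.

Lemma numrad_E_geC n N (F G : 'I_N -> 'cV[C]_n) i :
  (rc (vnorm (F i)) * rc (vnorm (G i)) + `|ip (F i) (G i)|) / 2
    <= rc (numrad (E_op [set i] F G)).
Proof.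
have hb := @E1_bound n N F G i.
have ge0 : 0 <= rc (numrad (E_op [set i] F G)) by rewrite rc_ge0; exact: numrad_ge0 hb.
set u := F i; set v := G i.
rewrite [ip u v]ip_conj norm_conjC.
set p := rc (vnorm u); set q := rc (vnorm v); set c := ip v u; set k := `|c|.
have p0 : 0 <= p by exact: vnormCP.
have q0 : 0 <= q by exact: vnormCP.
have k0 : 0 <= k by exact: normr_ge0.
have hcs : k <= q * p by exact: CS.
have [pq0|pqn0] := eqVneq (p * q) 0.
  have -> : k = 0 by apply/le_anti; rewrite k0 andbT (le_trans hcs) // mulrC pq0.
  by rewrite pq0 addr0 mul0r.
have pn0 : p != 0 by apply: contraNneq pqn0 => ->; rewrite mul0r.
have qn0 : q != 0 by apply: contraNneq pqn0 => ->; rewrite mulr0.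
have pqk : 0 < p * q + k by rewrite ltr_wpDr // lt_def pqn0 mulr_ge0.
have pqkn0 : p * q + k != 0 by rewrite gt_eqF.
pose mu : C := if c == 0 then 1 else c^* / k.
have kc : k^* = k by rewrite conj_Creal // ger0_real.
have hmu1 : mu * mu^* = 1.
  rewrite /mu; case: eqP => [_|/eqP cn0]; first by rewrite rmorph1 mulr1.
  have kn0 : k != 0 by rewrite normr_eq0.
  rewrite rmorphM /= fmorphV /= kc conjCK.
  rewrite mulrACA [c^* * c]mulrC -normCK -/k; field; exact: kn0.
have hmuc : mu * c = k.
  rewrite /mu; case: eqP => [c0|/eqP cn0]; first by rewrite /k c0 mul1r normr0.
  have kn0 : k != 0 by rewrite normr_eq0.
  rewrite mulrAC [c^* * c]mulrC -normCK -/k; field; exact: kn0.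
have mun0 : mu != 0 by apply: contra_eq_neq hmu1 => ->; rewrite mul0r eq_sym oner_eq0.
have muV : mu^* = mu^-1 by rewrite -[mu^*]mul1r -(mulVf mun0) -mulrA hmu1 mulr1.
have hc : c = mu^-1 * k by rewrite -hmuc mulrA mulVf // mul1r.
have hcc : ip u v = mu * k by rewrite ip_conj -/c hc rmorphM /= kc fmorphV /= muV invrK.
have pc : p^* = p by exact: conj_rc.
have qc : q^* = q by exact: conj_rc.
have huu : ip u u = p ^+ 2 by rewrite vnormC.
have hvv : ip v v = q ^+ 2 by rewrite vnormC.
set w := q *: u + (mu * p) *: v.
have Hwu : ip w u = p * (p * q + k).
  rewrite ipDl !ipZl huu -/c hc; field; exact: mun0.
have Hvw : ip v w = q * mu^-1 * (p * q + k).
  rewrite ipDr !ipZr qc rmorphM /= pc muV hvv -/c hc; field; exact: mun0.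
have HW : ip w w = 2 * p * q * (p * q + k).
  rewrite ipDl !ipDr !ipZl !ipZr qc rmorphM /= pc muV huu hvv hcc -/c hc.
  field; exact: mun0.
have W0 : 0 <= ip w w by exact: ipff_ge0.
have Wn0 : ip w w != 0.
  by rewrite HW !mulf_neq0 // ?pnatr_eq0.
set s := (sqrtC (ip w w))^-1.
have sc : s^* = s by rewrite conj_Creal // rpredV sqrtC_real.
have ss : s * s = (ip w w)^-1 by rewrite -expr2 exprVn sqrtCK.
set f := s *: w.
have f1 : vnorm f = 1.
  have h : rc (vnorm f) ^+ 2 = 1.
    rewrite vnormC ipZl ipZr sc mulrA ss mulVf //.
  apply: complexI; rewrite rmorph1; apply/eqP.
  by rewrite -sqrp_eq1 ?vnormCP // h.
have hE : ip (E_op [set i] F G f) f = mu^-1 * ((p * q + k) / 2).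
  rewrite E1E ipZl /f ipZl ipZr sc -/u -/v Hwu Hvw mulrACA ss HW.
  by field; rewrite ?(pn0, qn0, pqkn0, mun0, pnatr_eq0).
have mu1 : `|mu| = 1.
  by apply/eqP; rewrite -sqrp_eq1 // normCK hmu1.
have := numrad_ge hb f1; rewrite cabs_le hE normrM normfV mu1 invr1 mul1r.
rewrite ger0_norm //; apply: divr_ge0 => //; exact: ltW.
Qed.

Lemma ip_delta n (k : 'I_n) (g : 'cV[C]_n) : ip (delta_mx k 0) g = (g k 0)^*.
Proof.
rewrite /ip (bigD1 k) //= big1 ?addr0 => [|j /negbTE jk]; first by rewrite mxE !eqxx mul1r.
by rewrite mxE jk mul0r.
Qed.

Lemma trace_dual n N (F G : 'I_N -> 'cV[C]_n) : is_dual F G ->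
  \sum_i ip (F i) (G i) = n%:R.
Proof.
move=> hd.
have h1 : forall k : 'I_n, \sum_i F i k 0 * (G i k 0)^* = 1.
  move=> k; have := congr1 (fun M : 'cV[C]_n => M k 0) (hd (delta_mx k 0)).
  rewrite /= mxE !eqxx /= summxE => h; apply: etrans _ (esym h); apply: eq_bigr => i _.
  by rewrite mxE ip_delta mulrC.
rewrite /ip exchange_big /= (eq_bigr (fun=> 1)) => [|k _]; last exact: h1.
by rewrite sumr_const card_ord.
Qed.

Lemma le_eta n N (F G : 'I_N -> 'cV[C]_n) i :
  numrad (E_op [set i] F G) <= eta1FG F G.
Proof. by rewrite /eta1FG (bigD1 i) //= le_max lexx. Qed.

Lemma eta_ge0 n N (F G : 'I_N -> 'cV[C]_n) : 0 <= eta1FG F G.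
Proof.
rewrite /eta1FG; apply: (big_ind (fun x => 0 <= x)) => //=.
  by move=> x y hx hy; rewrite le_max hx.
move=> i _; exact: numrad_ge0 (@E1_bound n N F G i).
Qed.

Lemma eta_le n N (F G : 'I_N -> 'cV[C]_n) c : 0 <= c ->
  (forall i, numrad (E_op [set i] F G) <= c) -> eta1FG F G <= c.
Proof.
move=> c0 h; rewrite /eta1FG; apply: (big_ind (fun x => x <= c)) => //=.
by move=> x y hx hy; rewrite ge_max hx hy.
Qed.

Lemma cabs_le_omega n N (F G : 'I_N -> 'cV[C]_n) i :
  cabs (ip (F i) (G i)) <= numrad (E_op [set i] F G).
Proof.
rewrite cabs_le; apply: le_trans (numrad_E_geC F G i).
rewrite ler_pdivlMr // mulr_natr mulr2n lerD2r; exact: CS.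
Qed.

Lemma omega_ge n N (F G : 'I_N -> 'cV[C]_n) i :
  (vnorm (F i) * vnorm (G i) + cabs (ip (F i) (G i))) / 2
    <= numrad (E_op [set i] F G).
Proof.
rewrite -lecR; apply: le_trans (numrad_E_geC F G i).
by rewrite rmorphM rmorphD rmorphM /= fmorphV /= cabsE rmorph_nat.
Qed.

Lemma sum_cabs_ge n N (F G : 'I_N -> 'cV[C]_n) : is_dual F G ->
  n%:R <= \sum_i cabs (ip (F i) (G i)).
Proof.
move=> hd; rewrite -lecR rmorph_sum rmorph_nat /=.
under eq_bigr do rewrite cabsE.
have h := ler_norm_sum (index_enum 'I_N) (fun i => ip (F i) (G i)) xpredT.
by rewrite trace_dual // ger0_norm ?ler0n in h.
Qed.

Lemma eta_lb n N (F G : 'I_N -> 'cV[C]_n) : is_dual F G ->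
  n%:R / N%:R <= eta1FG F G.
Proof.
move=> hd; have [N0|Np] := posnP N.
  by rewrite (_ : N%:R = 0) ?invr0 ?mulr0 ?eta_ge0 // N0.
rewrite ler_pdivrMr ?ltr0n //.
apply: le_trans (sum_cabs_ge hd) _.
apply: le_trans (_ : \sum_(i < N) eta1FG F G <= _).
  apply: ler_sum => i _; apply: le_trans (cabs_le_omega F G i) _; exact: le_eta.
by rewrite sumr_const card_ord mulr_natr.
Qed.

Lemma sum_nN N n : (0 < N)%N -> \sum_(i < N) (n%:R / N%:R : R) = n%:R.
Proof.
move=> Np; rewrite sumr_const card_ord -[_ *+ N]mulr_natr.
by field; rewrite pnatr_eq0 -lt0n.
Qed.

Lemma sum_nNC N n : (0 < N)%N -> \sum_(i < N) (n%:R / N%:R : C) = n%:R.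
Proof.
move=> Np; rewrite sumr_const card_ord -[_ *+ N]mulr_natr.
by field; rewrite pnatr_eq0 -lt0n.
Qed.

Lemma cabs_le_norms n (f g : 'cV[C]_n) : cabs (ip f g) <= vnorm f * vnorm g.
Proof. by rewrite cabs_le rmorphM; exact: CS. Qed.

Lemma eta_of_norms n N (F G : 'I_N -> 'cV[C]_n) : is_dual F G ->
  (forall i, vnorm (F i) * vnorm (G i) = n%:R / N%:R) -> eta1FG F G = n%:R / N%:R.
Proof.
move=> hd hn; apply/le_anti; rewrite eta_lb // andbT.
apply: eta_le; first by rewrite divr_ge0 ?ler0n.
by move=> i; rewrite -(hn i) numrad_E_le.
Qed.

Lemma norms_of_eta n N (F G : 'I_N -> 'cV[C]_n) : is_dual F G ->
  eta1FG F G = n%:R / N%:R -> forall i,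
  vnorm (F i) * vnorm (G i) = n%:R / N%:R /\ cabs (ip (F i) (G i)) = n%:R / N%:R.
Proof.
move=> hd he i.
have Np : (0 < N)%N := leq_ltn_trans (leq0n i) (ltn_ord i).
set q : R := n%:R / N%:R.
have hab : forall j, (vnorm (F j) * vnorm (G j) + cabs (ip (F j) (G j))) / 2 <= q.
  by move=> j; rewrite /q -he; apply: le_trans (omega_ge F G j) (le_eta F G j).
have hbq : forall j, cabs (ip (F j) (G j)) <= q.
  move=> j; apply: le_trans (hab j); rewrite ler_pdivlMr // mulr_natr mulr2n lerD2r.
  exact: cabs_le_norms.
have ht : \sum_j (q - cabs (ip (F j) (G j))) = 0.
  apply/le_anti; rewrite sumr_ge0 ?andbT => [|j _]; last by rewrite subr_ge0.
  by rewrite sumrB sum_nN // subr_le0 sum_cabs_ge.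
have hb : cabs (ip (F i) (G i)) = q.
  have ht0 : forall j, xpredT j -> 0 <= q - cabs (ip (F j) (G j)).
    by move=> j _; rewrite subr_ge0.
  have := psumr_eq0P ht0 ht (i := i) isT.
  by move/eqP; rewrite subr_eq0 eq_sym => /eqP.
split => //; apply/le_anti; rewrite andbC -{1}hb cabs_le_norms /=.
have := hab i; rewrite hb ler_pdivrMr // mulr_natr mulr2n lerD2r //.
Qed.

Lemma ip_of_eta n N (F G : 'I_N -> 'cV[C]_n) : is_dual F G ->
  eta1FG F G = n%:R / N%:R -> forall i, ip (F i) (G i) = n%:R / N%:R.
Proof.
move=> hd he i.
have Np : (0 < N)%N := leq_ltn_trans (leq0n i) (ltn_ord i).
have hq : forall j, `|ip (F j) (G j)| <= n%:R / N%:R.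
  move=> j; rewrite -cabsE (proj2 (norms_of_eta hd he j)).
  by rewrite fmorph_div /= !rmorph_nat.
apply: (normC_sum_upper (P := xpredT) (fun j _ => hq j)) => //.
by rewrite trace_dual // sum_nNC.
Qed.

Lemma vnorm2 n (f : 'cV[C]_n) : vnorm f ^+ 2 = \sum_k cabs (f k 0) ^+ 2.
Proof.
apply: complexI; rewrite rmorphXn vnormC rmorph_sum /ip; apply: eq_bigr => k _.
by rewrite rmorphXn /= cabsE normCK.
Qed.

Lemma cabs_ipff n (f : 'cV[C]_n) : cabs (ip f f) = vnorm f ^+ 2.
Proof.
by apply: complexI; rewrite cabsE rmorphXn vnormC ger0_norm // ipff_ge0.
Qed.

Lemma sq_le (a b : R) : 0 <= a -> a <= b -> a ^+ 2 <= b ^+ 2.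
Proof. by move=> a0 ab; rewrite !expr2 ler_pM. Qed.

Lemma dual_frame n N (F G : 'I_N -> 'cV[C]_n) : is_dual F G -> is_frame F.
Proof.
move=> hd.
set K := \sum_i vnorm (G i) ^+ 2; set L := \sum_i vnorm (F i) ^+ 2.
have K0 : 0 <= K by rewrite sumr_ge0 // => i _; rewrite exprn_ge0 ?vnorm_ge0.
have L0 : 0 <= L by rewrite sumr_ge0 // => i _; rewrite exprn_ge0 ?vnorm_ge0.
have K1 : 0 < 1 + K by rewrite ltr_wpDr.
exists (1 + K)^-1, (1 + L); split; first by rewrite invr_gt0.
split.
  apply: le_trans (_ : 1 <= _); last by rewrite lerDl.
  by rewrite invf_le1 // lerDl.
move=> f; set S := \sum_i _.
have S0 : 0 <= S by rewrite sumr_ge0 // => i _; rewrite exprn_ge0 ?cabs_ge0.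
have hgen : forall H : 'I_N -> 'cV[C]_n,
    \sum_i cabs (ip f (H i)) ^+ 2 <= vnorm f ^+ 2 * \sum_i vnorm (H i) ^+ 2.
  move=> H; rewrite mulr_sumr; apply: ler_sum => i _.
  by rewrite -exprMn sq_le ?cabs_ge0 ?cabs_le_norms.
split; last first.
  apply: le_trans (hgen F) _; rewrite [X in _ <= X]mulrC.
  by apply: ler_wpM2l; rewrite ?exprn_ge0 ?vnorm_ge0 // /L ?lerDl ?lerDr ler01.
rewrite mulrC.
set a := vnorm f ^+ 2.
have a0 : 0 <= a by rewrite exprn_ge0 ?vnorm_ge0.
pose x : 'cV[C]_N := \col_i ip f (G i).
pose y : 'cV[C]_N := \col_i ip f (F i).
have hxy : ip f f = ip x y.
  rewrite {1}(hd f) ip_sumL [RHS]/ip; apply: eq_bigr => i _.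
  by rewrite /x /y !mxE -ip_conj.
have hx : vnorm x ^+ 2 <= a * K.
  by rewrite vnorm2; under eq_bigr do rewrite mxE; exact: hgen.
have hy : vnorm y ^+ 2 = S.
  by rewrite vnorm2; under eq_bigr do rewrite mxE.
have h1 : a <= vnorm x * vnorm y by rewrite /a -cabs_ipff hxy cabs_le_norms.
have h2 : a * a <= a * (K * S).
  apply: le_trans (_ : (vnorm x * vnorm y) ^+ 2 <= _).
    by rewrite -expr2 sq_le.
  by rewrite exprMn hy mulrA; apply: ler_wpM2r.
have [a00|an0] := eqVneq a 0; first by rewrite a00 mul0r.
have ap : 0 < a by rewrite lt_def an0 a0.
rewrite ler_pM2l // in h2.
rewrite ler_pdivrMr // mulrDr mulr1; apply: le_trans h2 _.
by rewrite mulrC lerDr.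
Qed.

Lemma prim_root_ex N : (0 < N)%N -> exists z : C, N.-primitive_root z.
Proof.
move=> Np.
pose p : {poly C} := 'X^N - 1; have [r Dp] := closed_field_poly_normal p.
rewrite (monicP _) ?monicXnsubC // scale1r in Dp.
have rn1: all N.-unity_root r by apply/allP=> z; rewrite -root_prod_XsubC -Dp.
have sz_r: (N < (size r).+1)%N.
  by rewrite -(size_prod_XsubC r id) -Dp size_XnsubC.
have [|z] := hasP (has_prim_root Np rn1 _ sz_r); last by exists z.
by rewrite -separable_prod_XsubC -Dp separable_Xn_sub_1 // pnatr_eq0 -lt0n.
Qed.

Lemma root_good n N : (n <= N)%N -> exists z : C,
  [/\ z ^+ N = 1, `|z| = 1 & forall k l : 'I_n, z ^+ k = z ^+ l -> k = l].
Proof.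
move=> nN; have [N0|Np] := posnP N.
  exists 1; split; rewrite ?expr1n ?normr1 //.
  by move=> [k hk]; exfalso; move: hk; rewrite ltnNge (leq_trans nN) // N0.
have [z pz] := prim_root_ex Np.
exists z; split; first exact: prim_expr_order pz.
  apply/eqP; rewrite -(@pexpr_eq1 _ _ N Np) ?normr_ge0 //.
  by rewrite -normrX (prim_expr_order pz) normr1.
move=> k l /eqP; rewrite (eq_prim_root_expr pz) => /eqP.
rewrite !modn_small ?(leq_trans (ltn_ord _) nN) // => kl.
exact: val_inj.
Qed.

Lemma geo_sum N (x : C) : x ^+ N = 1 ->
  \sum_(i < N) x ^+ i = if x == 1 then N%:R else 0.
Proof.
move=> xN; case: eqP => [->|/eqP x1].
  by rewrite (eq_bigr (fun=> 1)) ?sumr_const ?card_ord // => i _; rewrite expr1n.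
have := subrX1 x N; rewrite xN subrr => /esym/eqP.
by rewrite mulf_eq0 subr_eq0 (negbTE x1) /= => /eqP.
Qed.

Section Harm.
Variables (n N : nat) (z : C).
Hypotheses (nN : (n <= N)%N) (zN : z ^+ N = 1) (z1 : `|z| = 1)
  (zinj : forall k l : 'I_n, z ^+ k = z ^+ l -> k = l).

Definition HF (i : 'I_N) : 'cV[C]_n := \col_(k < n) (z ^+ k) ^+ i.
Definition HG (i : 'I_N) : 'cV[C]_n := (N%:R^-1) *: HF i.

Lemma wk1 (k : nat) (i : nat) : (z ^+ k) ^+ i * ((z ^+ k) ^+ i)^* = 1.
Proof. by rewrite -normCK !normrX z1 !expr1n. Qed.

Lemma HF_norm i : ip (HF i) (HF i) = n%:R.
Proof.
rewrite /ip (eq_bigr (fun=> 1)) ?sumr_const ?card_ord // => k _.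
by rewrite !mxE wk1.
Qed.

Lemma Nconj : (N%:R^-1 : C)^* = N%:R^-1.
Proof. by rewrite fmorphV /= rmorph_nat. Qed.

Lemma HG_norm i : ip (HG i) (HG i) = N%:R^-1 * N%:R^-1 * n%:R.
Proof. by rewrite /HG ipZl ipZr Nconj HF_norm mulrA. Qed.

Lemma H_dual : is_dual HF HG.
Proof.
move=> f; apply/matrixP => k j; rewrite ord1 summxE.
have e : forall i : 'I_N, (ip f (HG i) *: HF i) k 0 =
    N%:R^-1 * \sum_l f l 0 * ((z ^+ k) * (z ^+ l)^*) ^+ i.
  move=> i; rewrite mxE /HG ipZr Nconj /ip mxE -mulrA mulr_suml; congr (_ * _).
  apply: eq_bigr => l _; rewrite mxE exprMn rmorphXn /= -mulrA; congr (_ * _).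
  by rewrite mulrC.
rewrite (eq_bigr _ (fun i _ => e i)) -mulr_sumr exchange_big /=.
under eq_bigr do rewrite -mulr_sumr.
have xN : forall l : 'I_n, (z ^+ k * (z ^+ l)^*) ^+ N = 1.
  move=> l; rewrite exprMn rmorphXn /= -!exprM [(k * N)%N]mulnC [(l * N)%N]mulnC !exprM zN !expr1n ?rmorph1 ?conjC1 ?mulr1. by rewrite mul1r -rmorphXn /= zN rmorph1 expr1n.
rewrite (bigD1 k) //= [X in f k 0 * X]geo_sum // -normCK normrX z1 !expr1n eqxx.
rewrite big1 ?addr0 => [|l lk].
  rewrite mulrCA mulVf ?mulr1 // pnatr_eq0 -lt0n.
  exact: leq_ltn_trans (leq0n k) (leq_trans (ltn_ord k) nN).
rewrite geo_sum // ifF ?mulr0 //; apply/negbTE; apply: contra lk => /eqP h.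
apply/eqP; apply: zinj.
have hl : (z ^+ l)^* * z ^+ l = 1 by rewrite mulrC -normCK normrX z1 !expr1n.
by rewrite -[z ^+ l]mul1r -h -mulrA hl mulr1.
Qed.

Lemma H_norms i : vnorm (HF i) * vnorm (HG i) = n%:R / N%:R.
Proof.
have Np : (0 < N)%N := leq_ltn_trans (leq0n i) (ltn_ord i).
apply: complexI; rewrite rmorphM fmorph_div /= !rmorph_nat.
apply/eqP; rewrite -(@eqrXn2 _ 2) // ?mulr_ge0 ?vnormCP ?divr_ge0 ?ler0n //.
rewrite exprMn !vnormC HF_norm HG_norm; apply/eqP; field.
by rewrite pnatr_eq0 -lt0n.
by rewrite invr_ge0 ler0n.
Qed.

End Harm.

Lemma harmonic_exists n N : (n <= N)%N -> exists F G : 'I_N -> 'cV[C]_n,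
  dual_pair F G /\ forall i, vnorm (F i) * vnorm (G i) = n%:R / N%:R.
Proof.
move=> nN; have [z [zN z1 zinj]] := root_good nN.
exists (HF n z), (HG n z); split; last exact: H_norms.
have hd := H_dual nN zN z1 zinj.
by split => //; exact: dual_frame hd.
Qed.

Lemma eta1_val n N : (n <= N)%N -> eta1 R n N = n%:R / N%:R.
Proof.
move=> nN; have [F [G [hdp hn]]] := harmonic_exists nN.
have hin : [set eta1FG FG.1 FG.2 | FG in [set FG : ('I_N -> 'cV[C]_n) * ('I_N -> 'cV[C]_n) |
              dual_pair FG.1 FG.2]] (n%:R / N%:R).
  by exists (F, G) => //=; exact: eta_of_norms (proj2 hdp) hn.
have hlb : lbound [set eta1FG FG.1 FG.2 | FG in [set FG : ('I_N -> 'cV[C]_n) * ('I_N -> 'cV[C]_n) |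
              dual_pair FG.1 FG.2]] (n%:R / N%:R).
  by move=> y [[F' G'] /= [_ hd'] <-]; exact: eta_lb.
rewrite /eta1; apply/le_anti; apply/andP; split.
  by apply: ge_inf => //; exists (n%:R / N%:R).
apply: lb_le_inf => //; by exists (n%:R / N%:R).
Qed.

Definition CF (i : 'I_2) : 'cV[C]_2 :=
  \col_(k < 2) (if val i == 0%N then (if val k == 0%N then 1 else 0) else 1).
Definition CG (i : 'I_2) : 'cV[C]_2 :=
  \col_(k < 2) (if val i == 0%N then (if val k == 0%N then 1 else -1)
                else (if val k == 0%N then 0 else 1)).

Lemma ip2 (f g : 'cV[C]_2) : ip f g = f ord0 0 * (g ord0 0)^* + f (lift ord0 ord0) 0 * (g (lift ord0 ord0) 0)^*.
Proof. by rewrite /ip !big_ord_recl big_ord0 addr0. Qed.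

Lemma C_dual : is_dual CF CG.
Proof.
move=> f; apply/matrixP => k j; rewrite ord1 summxE !big_ord_recl big_ord0 addr0.
rewrite !mxE !ip2 !mxE /=.
case: k => [[|[|k]] hk] //=; rewrite ?rmorph1 ?rmorph0 ?rmorphN1.
  by rewrite (_ : Ordinal hk = ord0); [ring | exact: val_inj].
by rewrite (_ : Ordinal hk = lift ord0 ord0); [ring | exact: val_inj].
Qed.

Lemma C_ip i : ip (CF i) (CG i) = 1.
Proof.
rewrite ip2 !mxE /=.
case: i => [[|[|i]] hi] //=; rewrite ?rmorph1 ?rmorph0 ?rmorphN1; ring.
Qed.

Lemma C_not : vnorm (CF 0) * vnorm (CG 0) != 1.
Proof.
apply/eqP => h.
have : rc (vnorm (CF 0) * vnorm (CG 0)) ^+ 2 = 1 by rewrite h rmorph1 expr1n.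
rewrite rmorphM exprMn !vnormC !ip2 !mxE /= ?rmorph1 ?rmorph0 ?rmorphN1.
move=> /eqP; apply/negP.
have -> : (1 * 1 + 0 * 0) * (1 * 1 + -1 * -1) = 2%:R :> C by ring.
by rewrite pnatr_eq1.
Qed.

End A.

Local Close Scope classical_set_scope.

Theorem theorem5p1 (R : realType) :
  (forall n N : nat, (n <= N)%N -> eta1 R n N = n%:R / N%:R) /\
  (forall (n N : nat) (F G : 'I_N -> 'cV[R[i]]_n),
     (n <= N)%N -> dual_pair F G ->
     (inN1 F G <-> (forall i : 'I_N, vnorm (F i) * vnorm (G i) = n%:R / N%:R)) /\
     (inN1 F G -> forall i : 'I_N, ip (F i) (G i) = (n%:R / N%:R : R[i]))) /\
  (exists (n N : nat) (F G : 'I_N -> 'cV[R[i]]_n),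
     (n <= N)%N /\ dual_pair F G /\
     (forall i : 'I_N, ip (F i) (G i) = (n%:R / N%:R : R[i])) /\ ~ inN1 F G).
Proof.
split; first by move=> n N; exact: (@eta1_val R).
split.
  move=> n N F G nN [hf hd]; rewrite /inN1 (@eta1_val R n N nN).
  split; first split.
  - by move=> he i; exact: (proj1 (norms_of_eta hd he i)).
  - by move=> hn; exact: eta_of_norms hd hn.
  - by move=> he; exact: ip_of_eta hd he.
exists 2%N, 2%N, (@CF R), (@CG R).
split => //; split; first by split; [exact: dual_frame (@C_dual R) | exact: C_dual].
split; first by move=> i; rewrite C_ip divff // pnatr_eq0.
rewrite /inN1 (@eta1_val R 2 2) // => h.
have := proj1 (norms_of_eta (@C_dual R) h 0); rewrite divff ?pnatr_eq0 // => e.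
by move: (@C_not R); rewrite e eqxx.
Qed.
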